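(* Let $X$ be a real Banach space with $\dim X\ge 2$. Then $J(X)\,S_P(X)\ge C'_{NJ}(X)-1$.
   Context: For a real Banach space $X$ with unit sphere $S_X$, the P-angle constant is $S_P(X)=\sup\left\{\frac{\|x+y\|^2+\|x-y\|^2-4}{2\|x+y\|\,\|x-y\|}: x,y\in S_X,\ x\neq \pm y\right\}$. The James constant is $J(X)=\sup\{\min\{\|x+y\|,\|x-y\|\}: x,y\in S_X\}$, and the modified von Neumann–Jordan constant is $C'_{NJ}(X)=\sup\left\{\frac{\|x+y\|^2+\|x-y\|^2}{4}: x,y\in S_X\right\}$. *)

(* Defs.v *)
From HB Require Import structures.
From mathcomp Require Import all_boot all_order all_algebra.
From mathcomp Require Import all_classical all_reals all_analysis.
Set Implicit Arguments. Unset Strict Implicit. Unset Printing Implicit Defensive.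
Import Order.TTheory GRing.Theory Num.Theory.
Import numFieldNormedType.Exports.
Local Open Scope classical_set_scope.
Local Open Scope ring_scope.

Definition P_angle_const (R : realType) (X : normedModType R) : \bar R :=
  ereal_sup [set r : \bar R | exists x y : X,
    [/\ `|x| = 1, `|y| = 1, x <> y, x <> - y &
     r = ((`|x + y| ^+ 2 + `|x - y| ^+ 2 - 4) / (2 * `|x + y| * `|x - y|))%:E]].

Definition James_const (R : realType) (X : normedModType R) : \bar R :=
  ereal_sup [set r : \bar R | exists x y : X,
    [/\ `|x| = 1, `|y| = 1 &
     r = (Num.min `|x + y| `|x - y|)%:E]].

Definition mod_vNJ_const (R : realType) (X : normedModType R) : \bar R :=
  ereal_sup [set r : \bar R | exists x y : X,
    [/\ `|x| = 1, `|y| = 1 &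
     r = ((`|x + y| ^+ 2 + `|x - y| ^+ 2) / 4)%:E]].

(* Main.v *)
Require Import Defs.
From HB Require Import structures.
From mathcomp Require Import all_boot all_order all_algebra.
From mathcomp Require Import all_classical all_reals all_analysis.
Import Order.TTheory GRing.Theory Num.Theory.
From mathcomp Require Import ring lra.
Import numFieldNormedType.Exports.
Local Open Scope ring_scope.
Lemma contf (R : realType) (X : normedModType R) (e x0 y0 : X)
  (hw : forall t : R, (1 - 2*t) *: y0 + (4*t*(1-t)) *: x0 != 0) :
  continuous (fun t : R =>
    `|e + `|(1 - 2*t) *: y0 + (4*t*(1-t)) *: x0|^-1 *: ((1 - 2*t) *: y0 + (4*t*(1-t)) *: x0)|
  - `|e - `|(1 - 2*t) *: y0 + (4*t*(1-t)) *: x0|^-1 *: ((1 - 2*t) *: y0 + (4*t*(1-t)) *: x0)|).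
Proof.
move=> t.
have cs1 : {for t, continuous (fun t : R => 1 - 2 * t)}.
  apply: continuousB; first exact: cst_continuous.
  apply: continuousM; [exact: cst_continuous| exact: cvg_id].
have cs2 : {for t, continuous (fun t : R => 4 * t * (1 - t))}.
  apply: continuousM; last first.
    apply: continuousB; [exact: cst_continuous| exact: cvg_id].
  apply: continuousM; [exact: cst_continuous| exact: cvg_id].
have cw : {for t, continuous (fun t : R => (1 - 2*t) *: y0 + (4*t*(1-t)) *: x0)}.
  apply: continuousD; apply: continuousZr_tmp => //.
have cn : {for t, continuous (fun t : R => `|(1 - 2*t) *: y0 + (4*t*(1-t)) *: x0|)}.
  exact: (continuous_comp cw (@norm_continuous _ _ _)).
have cu : {for t, continuous (fun t : R => `|(1 - 2*t) *: y0 + (4*t*(1-t)) *: x0|^-1 *: ((1 - 2*t) *: y0 + (4*t*(1-t)) *: x0))}.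
  apply: continuousZ => //; apply: continuousV => //.
  by rewrite normr_eq0.
have c1 : {for t, continuous (fun s : R => `|e + `|(1 - 2*s) *: y0 + (4*s*(1-s)) *: x0|^-1 *: ((1 - 2*s) *: y0 + (4*s*(1-s)) *: x0)|)}.
  apply: (continuous_comp _ (@norm_continuous _ _ _)).
  apply: continuousD => //; exact: cst_continuous.
have c2 : {for t, continuous (fun s : R => `|e - `|(1 - 2*s) *: y0 + (4*s*(1-s)) *: x0|^-1 *: ((1 - 2*s) *: y0 + (4*s*(1-s)) *: x0)|)}.
  apply: (continuous_comp _ (@norm_continuous _ _ _)).
  apply: continuousB => //; exact: cst_continuous.
exact: (cvgB c1 c2).
Qed.

Lemma two_le_sum (R : realType) (X : normedModType R) (x y : X) :
  `|x| = 1 -> 2 <= `|x + y| + `|x - y|.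
Proof.
move=> hx.
have -> : 2 = `|(x + y) + (x - y)|.
  by rewrite addrACA subrr addr0 -mulr2n normrMn hx.
exact: ler_normD.
Qed.

Lemma P_nonneg (R : realType) (X : normedModType R) (x y : X) :
  `|x| = 1 -> `|y| = 1 -> x <> y -> x <> - y ->
  4 <= `|x + y| ^+ 2 + `|x - y| ^+ 2 -> (0%:E <= P_angle_const X)%E.
Proof.
move=> hx hy nxy nxny h4.
apply: le_ereal_sup_tmp.
exists ((`|x + y| ^+ 2 + `|x - y| ^+ 2 - 4) / (2 * `|x + y| * `|x - y|))%:E.
  by exists x, y; split.
rewrite lee_fin; apply: divr_ge0; first by rewrite subr_ge0.
by rewrite !mulr_ge0.
Qed.

Lemma James_pair (R : realType) (X : normedModType R) (x y : X) :
  `|x| = 1 -> `|y| = 1 -> `|x + y| = `|x - y| -> (0%:E <= P_angle_const X)%E.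
Proof.
move=> hx hy hab.
have h2 := @two_le_sum _ _ x y hx.
set a := `|x + y| in hab h2.
have a1 : 1 <= a by rewrite -hab in h2; lra.
have a0 : 0 < a by lra.
have [le2|lt2] := leP 2 (a ^+ 2).
  apply: (@P_nonneg _ _ x y hx hy).
  - by move=> e; move: hab; rewrite e subrr normr0 => ha; lra.
  - by move=> e; move: a1; rewrite /a e addNr normr0; lra.
  - by rewrite -hab -/a; lra.
pose u := a^-1 *: (x + y); pose v := a^-1 *: (x - y).
have nu : `|u| = 1 by rewrite normrZ ger0_norm ?invr_ge0 ?ltW // mulVf ?gt_eqF.
have nv : `|v| = 1 by rewrite normrZ ger0_norm ?invr_ge0 ?ltW // -hab mulVf ?gt_eqF.
have e1 : `|u + v| = 2 / a.
  rewrite -scalerDr addrACA subrr addr0 normrZ ger0_norm ?invr_ge0 ?ltW //.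
  by rewrite -mulr2n normrMn hx mulrC.
have e2 : `|u - v| = 2 / a.
  rewrite -scalerBr.
  have -> : (x + y) - (x - y) = y + y by rewrite opprB addrC addrA subrK.
  rewrite normrZ ger0_norm ?invr_ge0 ?ltW //.
  by rewrite -mulr2n normrMn hy mulrC.
have q0 : 0 < 2 / a by rewrite divr_gt0.
apply: (@P_nonneg _ _ u v nu nv).
- by move=> e; move: e2; rewrite e subrr normr0 => z; lra.
- by move=> e; move: e1; rewrite e addNr normr0 => z; lra.
- rewrite e1 e2.
  suff h : 2 <= (2 / a) ^+ 2 by lra.
  rewrite expr_div_n ler_pdivlMr ?exprn_gt0 //.
  rewrite [(2:R) ^+ 2]expr2; lra.
Qed.

Lemma unit_of (R : realType) (X : normedModType R) (x0 : X) :
  x0 != 0 -> `| `|x0|^-1 *: x0| = 1.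
Proof.
move=> h; rewrite normrZ ger0_norm ?invr_ge0 // mulVf //.
by rewrite normr_eq0.
Qed.

Lemma S_nonneg (R : realType) (X : normedModType R)
  (hdim : exists x y : X, forall a b : R, a *: x + b *: y = 0 -> a = 0 /\ b = 0) :
  (0%:E <= P_angle_const X)%E.
Proof.
case: hdim => x0 [y0 hind].
have x0n : x0 != 0.
  apply/eqP => e; have := hind 1 0; rewrite e scaler0 scale0r addr0.
  by case=> // /eqP; rewrite oner_eq0.
have y0n : y0 != 0.
  apply/eqP => e; have := hind 0 1; rewrite e scaler0 scale0r addr0.
  by case=> // _ /eqP; rewrite oner_eq0.
have hw : forall t : R, (1 - 2*t) *: y0 + (4*t*(1-t)) *: x0 != 0.
  move=> t; apply/eqP; rewrite addrC => /hind [h2 h1].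
  have ht : t = 2^-1 by lra.
  by move: h2; rewrite ht; lra.
pose e := `|x0|^-1 *: x0.
have ne : `|e| = 1 by exact: (@unit_of _ _ x0).
pose w := fun t : R => (1 - 2*t) *: y0 + (4*t*(1-t)) *: x0.
pose u := fun t : R => `|w t|^-1 *: w t.
pose f := fun t : R => `|e + u t| - `|e - u t|.
have cf : continuous f by exact: (@contf R X e x0 y0 hw).
have w0 : w 0 = y0 by rewrite /w !(mulr0, mul0r, subr0, scale0r, addr0, scale1r).
have w1 : w 1 = - y0.
  rewrite /w !(mulr1, subrr, mulr0, scale0r, addr0).
  have -> : (1 - 2 : R) = -1 by lra.
  by rewrite scaleN1r.
have f1 : f 1 = - f 0.
  rewrite /f /u w1 w0 normrN scalerN opprK opprB.
  by rewrite (addrC e) -(opprK (`|y0|^-1 *: y0)) opprK.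
have [c _ fc] : exists2 c, c \in `[0, 1] & f c = 0.
  apply: IVT => //; first exact: continuous_subspaceT.
  rewrite f1 ge_min le_max; case: (leP 0 (f 0)) => h.
    by apply/andP; split; apply/orP; [right|left]; lra.
  by apply/andP; split; apply/orP; [left|right]; lra.
apply: (@James_pair R X e (u c) ne).
  by rewrite /u /w; apply: unit_of; apply: hw.
by move: fc; rewrite /f; lra.
Qed.

Theorem mainTheorem5 (R : realType) (X : completeNormedModType R)
  (hdim : exists x y : X, forall a b : R, a *: x + b *: y = 0 -> a = 0 /\ b = 0) :
  (mod_vNJ_const X - 1%:E <= James_const X * P_angle_const X)%E.
Proof.
have S0 := @S_nonneg _ _ hdim.
have [e ne] : exists e : X, `|e| = 1.
  case: hdim => x0 [y0 hind].
  have x0n : x0 != 0.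
    apply/eqP => e; have := hind 1 0; rewrite e scaler0 scale0r addr0.
    by case=> // /eqP; rewrite oner_eq0.
  by exists (`|x0|^-1 *: x0); exact: (@unit_of _ _ x0).
have J0 : (0%:E <= James_const X)%E.
  apply: le_ereal_sup_tmp; exists (Num.min `|e + e| `|e - e|)%:E.
    by exists e, e; split.
  by rewrite lee_fin subrr normr0 le_min normr_ge0 lexx.
have JS0 := mule_ge0 J0 S0.
rewrite leeBlDr //.
apply: ge_ereal_sup => r [x [y [hx hy ->]]].
have ha2 : `|x + y| <= 2 by rewrite (le_trans (ler_normD _ _)) // hx hy; lra.
have hb2 : `|x - y| <= 2 by rewrite (le_trans (ler_normB _ _)) // hx hy; lra.
have h2 := @two_le_sum _ _ x y hx.
have a0 := normr_ge0 (x + y); have b0 := normr_ge0 (x - y).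
case: (leP ((`|x + y| ^+ 2 + `|x - y| ^+ 2) / 4) 1) => hv.
  apply: (@le_trans _ _ 1%:E); first by rewrite lee_fin.
  by rewrite -{1}(add0e 1%:E); apply: leeD2r.
have xy : x <> y.
  move=> exy; move: hv; rewrite exy subrr normr0 => hv.
  rewrite exy in ha2; suff : (1 < 1 :> R) by rewrite ltxx. have := normr_ge0 (y + y); rewrite [0 ^+ 2]expr2 mulr0 addr0 in hv; nra.
have xny : x <> - y.
  move=> exy; move: hv; rewrite exy addNr normr0 => hv.
  rewrite exy in hb2; suff : (1 < 1 :> R) by rewrite ltxx. have := normr_ge0 (- y - y); rewrite [0 ^+ 2]expr2 mulr0 add0r in hv; nra.
have ap : 0 < `|x + y|.
  rewrite normr_gt0; apply/eqP => /eqP; rewrite addr_eq0 => /eqP //.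
have bp : 0 < `|x - y|.
  rewrite normr_gt0; apply/eqP => /eqP; rewrite subr_eq0 => /eqP //.
set a := `|x + y| in ha2 h2 a0 hv ap *.
set b := `|x - y| in hb2 h2 b0 hv bp *.
set P := (a ^+ 2 + b ^+ 2 - 4) / (2 * a * b).
have P0 : 0 <= P.
  rewrite /P divr_ge0 //; last by rewrite !mulr_ge0.
  by rewrite subr_ge0; lra.
have key : (a ^+ 2 + b ^+ 2) / 4 = (a * b / 2) * P + 1.
  rewrite /P; field.
  by rewrite !gt_eqF.
rewrite key EFinD; apply: leeD2r.
apply: (@le_trans _ _ (Num.min a b * P)%:E).
  rewrite lee_fin ler_wpM2r //.
  rewrite le_min; apply/andP; split; nra.
rewrite EFinM; apply: lee_pmul.
- by rewrite lee_fin le_min a0 b0.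
- by rewrite lee_fin.
- by apply: le_ereal_sup_tmp; exists (Num.min a b)%:E => //; exists x, y; split.
- by apply: le_ereal_sup_tmp; exists P%:E => //; exists x, y; split.
Qed.
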